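(* Let $\Lambda^*$ be the group of invertible elements of $\Lambda$. The set $U=\{[v_1,\dots,v_{m+2n}]\in\mathbf{E}: (v_i,v_i)\in\Lambda^*\text{ for }1\le i\le m,\ (v_{m+2j-1},v_{m+2j})\in\Lambda^*\text{ for }1\le j\le n\}$ is dense in $\mathbf{E}$: every polynomial function on $\mathbf{E}$ vanishing on $U$ is identically zero.
   Context: $\Lambda=\varinjlim\wedge(\mathbb{C}^N)$ is the infinite Grassmann algebra ($\mathbb{Z}_2$-graded, supercommutative). $V_{\mathbb{C}}$ is a complex superspace of superdimension $(m|2n)$ with nondegenerate even supersymmetric form and standard homogeneous basis $e_1,\dots,e_{m+2n}$ ($e_1,\dots,e_m$ even); $V=V_{\mathbb{C}}\otimes\Lambda$ with the $\Lambda$-bilinearly extended form. $\mathbf{E}=\mathrm{End}_\Lambda(V)_{\bar0}$; an element $A\in\mathbf{E}$ is written $A=[v_1,\dots,v_{m+2n}]$ where $v_j=Ae_j$ (so $v_j\in V_{\bar0}$ for $j\le m$ and $v_j\in V_{\bar1}$ for $j>m$). A polynomial function on $\mathbf{E}$ is a finite $\Lambda$-linear combination of monomials in the matrix coefficients $a_{ij}\in\Lambda$ of $A$ (defined by $Ae_j=\sum_ie_ia_{ij}$). *)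

(* Defs.v *)
From HB Require Import structures.
From mathcomp Require Import all_boot all_order all_algebra.
From mathcomp Require Import reals.
From mathcomp Require Import complex.
From Stdlib Require Lists.List.
Set Implicit Arguments. Unset Strict Implicit. Unset Printing Implicit Defensive.
Import Order.TTheory GRing.Theory Num.Theory.
Local Open Scope ring_scope.

(* The infinite Grassmann algebra  Lambda = lim_N  /\(C^N)  over C = R[i],   *)
(* Generators xi_0, xi_1, ... .  An element x is represented by its          *)
(* coefficient function  x : seq nat -> C,  where x S is the coefficient of  *)
(* the monomial xi_{s_1} ... xi_{s_k} for S = [:: s_1; ...; s_k] strictly    *)
(* increasing.  Elements of Lambda are those with x S = 0 unless S is        *)
(* strictly increasing, and involving only finitely many generators.         *)

Section Grassmann.
Variable R : realType.
Local Notation C := (R[i]).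

Definition lam := seq nat -> C.

Definition is_lam (x : lam) : Prop :=
  (forall S, ~~ sorted ltn S -> x S = 0) /\
  exists N : nat, forall S, x S != 0 -> all (fun s => s < N)%N S.

Definition lam_eq (x y : lam) : Prop := forall S, x S = y S.

Definition lam0 : lam := fun _ => 0.
Definition lam1 : lam := fun S => if S is [::] then 1 else 0.
Definition lam_add (x y : lam) : lam := fun S => x S + y S.

(* sign of the shuffle bringing (T ++ T') into increasing order:           *)
Definition shuffle_sign (T T' : seq nat) : C :=
  (-1) ^+ (\sum_(t <- T) count (fun t' => (t' < t)%N) T')%N.

Definition lam_mul (x y : lam) : lam := fun S =>
  if sorted ltn S then
    \sum_(b : (size S).-tuple bool)
       shuffle_sign (mask b S) (mask (map negb b) S)
       * x (mask b S) * y (mask (map negb b) S)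
  else 0.

Definition lam_prod (s : seq lam) : lam := foldr lam_mul lam1 s.
Definition lam_sum (s : seq lam) : lam := foldr lam_add lam0 s.

Definition lam_unit (x : lam) : Prop :=
  exists y, is_lam y /\ lam_eq (lam_mul x y) lam1 /\ lam_eq (lam_mul y x) lam1.

Definition lam_homog (p : bool) (x : lam) : Prop :=
  forall S, x S != 0 -> odd (size S) = p.

Definition lam_par (x : lam) : lam := fun S => (-1) ^+ size S * x S.

(* The superspace V_C of superdimension (m|2n), basis e_0,...,e_{m+2n-1}     *)
(* (0-indexed; e_0..e_{m-1} even), and the standard supersymmetric form:    *)
(*   (e_i, e_i) = 1 for i < m,                                              *)
(*   (e_{m+2j}, e_{m+2j+1}) = 1, (e_{m+2j+1}, e_{m+2j}) = -1 for j < n,       *)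
(*   all other pairings 0.                                                   *)

Variables m n : nat.
Local Notation d := (m + n.*2)%N.

Definition bpar (i : 'I_d) : bool := (m <= i)%N.

Definition form_coef (k l : 'I_d) : C :=
  if ((k < m)%N && (k == l :> nat)) then 1
  else if (m <= k)%N && (m <= l)%N then
    (if ~~ odd (k - m) && (l == k.+1 :> nat) then 1
     else if odd (k - m) && (k == l.+1 :> nat) then -1 else 0)
  else 0.

(* An element A of E = End_Lambda(V)_0 is given by its matrix coefficients
   a_{ij} in Lambda, A e_j = sum_i e_i a_{ij}; evenness of A means
   a_{ij} has parity p(i) + p(j). *)
Definition mat := 'I_d -> 'I_d -> lam.

Definition in_E (A : mat) : Prop :=
  forall i j, is_lam (A i j) /\ lam_homog (bpar i (+) bpar j) (A i j).

(* Lambda-bilinear extension of the form to V = V_C (x) Lambda, with scalars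
   on the right: for v = sum_k e_k a_k and w = sum_l e_l b_l,
   (v, w) = sum_{k,l} (e_k, e_l) * (par^{p(l)} a_k) * b_l,
   (moving a_k past e_l produces the parity automorphism). *)
Definition form (a b : 'I_d -> lam) : lam :=
  lam_sum [seq lam_mul (fun S => form_coef k l * (if bpar l then lam_par (a k) else a k) S)
                        (b l) | k <- enum 'I_d, l <- enum 'I_d].

Definition col (A : mat) (j : 'I_d) : 'I_d -> lam := fun i => A i j.

Definition in_U (A : mat) : Prop :=
  (forall i : 'I_d, (i < m)%N -> lam_unit (form (col A i) (col A i))) /\
  (forall (j : nat) (h1 : (m + j.*2 < d)%N) (h2 : ((m + j.*2).+1 < d)%N),
      lam_unit (form (col A (Ordinal h1)) (col A (Ordinal h2)))).

(* A polynomial is a list of terms (c, mono),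
   c in Lambda, mono a list of index pairs (i,j); its value at A is
   sum c * a_{i1 j1} * ... * a_{ik jk}. *)
Definition poly_fun := seq (lam * seq ('I_d * 'I_d)).

Definition poly_ok (P : poly_fun) : Prop := forall t, Stdlib.Lists.List.In t P -> is_lam t.1.

Definition poly_eval (P : poly_fun) (A : mat) : lam :=
  lam_sum [seq lam_mul t.1 (lam_prod [seq A ij.1 ij.2 | ij <- t.2]) | t <- P].

End Grassmann.

(* Main.v *)
Require Import Defs.
From HB Require Import structures.
From mathcomp Require Import all_boot all_order all_algebra.
From mathcomp Require Import reals.
From mathcomp Require Import complex.
From Stdlib Require Import FunctionalExtensionality.
Set Implicit Arguments. Unset Strict Implicit. Unset Printing Implicit Defensive.
Import Order.TTheory GRing.Theory Num.Theory.
Local Open Scope ring_scope.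
From mathcomp Require Import ring.

Section A.
Variable R : realType.
Local Notation C := (R[i]).
Local Notation lam := (lam R).

Lemma lam_sumE (s : seq lam) S : lam_sum s S = \sum_(x <- s) x S.
Proof.
elim: s => [|x s IH]; first by rewrite big_nil.
by rewrite big_cons /= /lam_add -IH.
Qed.

Lemma sum_neq0_ex (I : finType) (P : pred I) (F : I -> C) :
  \sum_(i | P i) F i != 0 -> exists i, P i /\ F i != 0.
Proof.
case: (boolP [exists i, P i && (F i != 0)]) => [/existsP[i /andP[]] | /existsPn H].
  by move=> Pi Fi _; exists i.
rewrite big1 ?eqxx // => i Pi; move: (H i); rewrite Pi /= negbK; by move/eqP.
Qed.

Lemma mask_all (p : pred nat) (S : seq nat) (b : seq bool) :
  size b = size S -> all p (mask b S) -> all p (mask (map negb b) S) -> all p S.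
Proof.
elim: S b => [|s S IH] [|c b] //= [] /IH {}IH.
by case: c => /= [/andP[-> H1] H2 | H1 /andP[-> H2]]; rewrite IH.
Qed.

Lemma size_masks (S : seq nat) (b : seq bool) :
  size b = size S -> (size (mask b S) + size (mask (map negb b) S) = size S)%N.
Proof.
move=> hb; rewrite !size_mask ?size_map // count_map.
by rewrite -hb -(count_predC id b); congr (_ + _)%N; apply: eq_count.
Qed.

Lemma mask_disj (S : seq nat) (b : seq bool) t :
  size b = size S -> uniq S -> t \in mask b S -> t \in mask (map negb b) S -> False.
Proof.
elim: S b => [|s S IH] [|c b] //= [] hb /andP[sS uS].
case: c => /=; rewrite ?in_cons.
  case/orP => [/eqP -> /mem_mask | ]; first by rewrite (negbTE sS).
  by move=> h1 h2; apply: (IH b).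
move=> h1; case/orP => [/eqP ht | h2]; last by apply: (IH b).
by move: h1; rewrite ht => /mem_mask; rewrite (negbTE sS).
Qed.

Definition sc (T T' : seq nat) : nat := \sum_(t <- T) count (fun t' => (t' < t)%N) T'.

Lemma countE (p : pred nat) s : count p s = \sum_(x <- s) (p x : nat).
Proof. by elim: s => [|x s IH]; rewrite ?big_nil ?big_cons //= IH. Qed.

Lemma sc_sym (T T' : seq nat) :
  (forall t, t \in T -> t \in T' -> False) ->
  (sc T T' + sc T' T = size T * size T')%N.
Proof.
move=> hd; rewrite /sc.
under eq_bigr do rewrite countE.
under [X in (_ + X)%N]eq_bigr do rewrite countE.
rewrite [X in (_ + X)%N](exchange_big) -big_split /=.
rewrite big_seq (eq_bigr (fun _ => size T')); last first.
  move=> t tT; rewrite -big_split /= -sum1_size big_seq [RHS]big_seq.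
  apply: eq_bigr => t' t'T.
  case: (ltngtP t' t) => //= e; exfalso; apply: (hd t) => //; by rewrite -e.
rewrite -big_seq.
by elim: T {hd} => [|x T IH]; rewrite ?big_nil ?big_cons //= IH mulSn.
Qed.


Lemma lam_mul_nil (x y : lam) : lam_mul x y [::] = x [::] * y [::].
Proof.
rewrite /lam_mul /=.
under eq_bigr do rewrite !mask0.
by rewrite sumr_const card_tuple /= /shuffle_sign big_nil expr0 mul1r.
Qed.

Lemma lam_mulE (x y : lam) S : sorted ltn S ->
  lam_mul x y S = x [::] * y S +
    \sum_(b : (size S).-tuple bool | b != nseq_tuple (size S) false)
     shuffle_sign R (mask b S) (mask (map negb b) S) * x (mask b S) * y (mask (map negb b) S).
Proof.
move=> sS; rewrite /lam_mul sS (bigD1 (nseq_tuple (size S) false)) //=.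
by rewrite mask_false map_nseq /= mask_true // /shuffle_sign big_nil expr0 mul1r.
Qed.

Lemma size_neg_lt (S : seq nat) (b : (size S).-tuple bool) : b != nseq_tuple (size S) false ->
  (size (mask (map negb b) S) < size S)%N.
Proof.
move=> hb; have hh : has id b.
  apply: contraNT hb => /hasPn h; apply/eqP/val_inj => /=.
  have /all_pred1P E : all (pred1 false) b by apply/allP => c /h; case: c.
  by rewrite E size_tuple.
have e := size_masks (size_tuple b).
have h0 : (0 < size (mask b S))%N by rewrite size_mask ?size_tuple // -has_count.
move: h0 e; move: (size (mask b S)) (size (mask (map negb b) S)) => p q h0 <-.
by rewrite -[X in (X < _)%N]add0n ltn_add2r.
Qed.

Lemma sign_sym (T T' : seq nat) : (forall t, t \in T -> t \in T' -> False) -> ~~ odd (size T) ->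
   shuffle_sign R T T' = shuffle_sign R T' T.
Proof.
move=> hd ev; rewrite /shuffle_sign -signr_odd -[RHS]signr_odd; congr (_ ^+ _).
have := sc_sym hd; rewrite /sc => /(congr1 odd); rewrite oddD oddM (negbTE ev) /=.
by case: (odd _); case: (odd _).
Qed.

Lemma lam_mul_comm_even (a z : lam) : lam_homog false a -> forall S, lam_mul a z S = lam_mul z a S.
Proof.
move=> ha S; rewrite /lam_mul; case: ifP => // sS.
pose f (b : (size S).-tuple bool) := map_tuple negb b.
have fK : involutive f by move=> b; apply: val_inj; rewrite /= (mapK negbK).
rewrite (reindex_inj (inv_inj fK)); apply: eq_bigr => b _ /=.
rewrite (mapK negbK).
have hs := size_tuple b.
have us : uniq S by move: sS; rewrite ltn_sorted_uniq_leq => /andP[].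
case: (eqVneq (a (mask (map negb b) S)) 0) => [->|nz]; first by rewrite !mulr0 mul0r.
have ev := ha _ nz.
rewrite (sign_sym (T := mask (map negb b) S)) ?ev //; last first.
  move=> t h1 h2; apply: (mask_disj (size_tuple b) us h2 h1).
by rewrite -!mulrA [a _ * _]mulrC.
Qed.

Lemma is_lam_ext (x y : lam) : (forall S, x S = y S) -> is_lam x -> is_lam y.
Proof.
move=> e [h1 [N hN]]; split; first by move=> S hS; rewrite -e h1.
by exists N => S; rewrite -e; apply: hN.
Qed.

Lemma is_lam_mul (x y : lam) : is_lam x -> is_lam y -> is_lam (lam_mul x y).
Proof.
move=> [hx1 [Nx hx]] [hy1 [Ny hy]]; split.
  by move=> S hS; rewrite /lam_mul (negbTE hS).
exists (maxn Nx Ny) => S; rewrite /lam_mul; case: ifP; last by rewrite eqxx.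
move=> sS /sum_neq0_ex [b [_]]; rewrite !mulf_eq0 !negb_or => /andP[/andP[_ h1] h2].
apply: (mask_all (size_tuple b)).
  by apply: sub_all (hx _ h1) => s /= /leq_trans; apply; rewrite leq_maxl.
by apply: sub_all (hy _ h2) => s /= /leq_trans; apply; rewrite leq_maxr.
Qed.

Lemma is_lam0 : is_lam (fun _ : seq nat => 0 : C).
Proof. by split => // ; exists 0%N => S; rewrite eqxx. Qed.

Lemma is_lam_add (x y : lam) : is_lam x -> is_lam y -> is_lam (lam_add x y).
Proof.
move=> [hx1 [Nx hx]] [hy1 [Ny hy]]; split.
  by move=> S hS; rewrite /lam_add hx1 ?hy1 ?addr0.
exists (maxn Nx Ny) => S; rewrite /lam_add.
case: (eqVneq (x S) 0) => [-> | h1]; rewrite ?add0r => h2.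
  by apply: sub_all (hy _ h2) => s /= /leq_trans; apply; rewrite leq_maxr.
by apply: sub_all (hx _ h1) => s /= /leq_trans; apply; rewrite leq_maxl.
Qed.

Lemma is_lam_scale (c : C) (x : lam) : is_lam x -> is_lam (fun S => c * x S).
Proof.
move=> [hx1 [Nx hx]]; split; first by move=> S hS; rewrite hx1 ?mulr0.
by exists Nx => S; rewrite mulf_eq0 negb_or => /andP[_ /hx].
Qed.

Lemma is_lam_par (x : lam) : is_lam x -> is_lam (lam_par x).
Proof.
move=> [hx1 [Nx hx]]; split; first by move=> S hS; rewrite /lam_par hx1 ?mulr0.
by exists Nx => S; rewrite /lam_par mulf_eq0 negb_or => /andP[_ /hx].
Qed.

Lemma is_lam1 : is_lam (lam1 R).
Proof.
split; first by move=> [|a l].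
by exists 0%N => -[|a l] //=; rewrite eqxx.
Qed.

Lemma is_lam_bigsum (I : Type) (r : seq I) (F : I -> lam) :
  (forall i, is_lam (F i)) -> is_lam (fun S => \sum_(i <- r) F i S).
Proof.
move=> hF; elim: r => [|i r IH].
  by apply: is_lam_ext is_lam0 => S; rewrite big_nil.
by apply: is_lam_ext (is_lam_add (hF i) IH) => S; rewrite big_cons.
Qed.


Lemma homog_ext p (x y : lam) : (forall S, x S = y S) -> lam_homog p x -> lam_homog p y.
Proof. by move=> e h S; rewrite -e; apply: h. Qed.

Lemma homog0 p : lam_homog p (fun _ : seq nat => 0 : C).
Proof. by move=> S; rewrite eqxx. Qed.

Lemma homog_mul p q (x y : lam) : lam_homog p x -> lam_homog q y -> lam_homog (p (+) q) (lam_mul x y).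
Proof.
move=> hx hy S; rewrite /lam_mul; case: ifP; last by rewrite eqxx.
move=> sS /sum_neq0_ex [b [_]]; rewrite !mulf_eq0 !negb_or => /andP[/andP[_ h1] h2].
by rewrite -(size_masks (size_tuple b)) oddD (hx _ h1) (hy _ h2).
Qed.

Lemma homog_add p (x y : lam) : lam_homog p x -> lam_homog p y -> lam_homog p (lam_add x y).
Proof.
move=> hx hy S; rewrite /lam_add.
by case: (eqVneq (x S) 0) => [-> | h1]; rewrite ?add0r => h2; [apply: hy | apply: hx].
Qed.

Lemma homog_scale p (c : C) (x : lam) : lam_homog p x -> lam_homog p (fun S => c * x S).
Proof. by move=> hx S; rewrite mulf_eq0 negb_or => /andP[_ /hx]. Qed.

Lemma homog_par p (x : lam) : lam_homog p x -> lam_homog p (lam_par x).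
Proof. by move=> hx S; rewrite /lam_par mulf_eq0 negb_or => /andP[_ /hx]. Qed.

Lemma homog1 : lam_homog false (lam1 R).
Proof. by move=> -[|a l] //=; rewrite eqxx. Qed.

Lemma homog_bigsum p (I : Type) (r : seq I) (F : I -> lam) :
  (forall i, lam_homog p (F i)) -> lam_homog p (fun S => \sum_(i <- r) F i S).
Proof.
move=> hF; elim: r => [|i r IH].
  by apply: homog_ext (homog0 p) => S; rewrite big_nil.
by apply: homog_ext (homog_add (hF i) IH) => S; rewrite big_cons.
Qed.

Section Inv.
Variable x : lam.

Fixpoint yf (k : nat) (S : seq nat) : C :=
  if k is k'.+1 then
    if sorted ltn S then (x [::])^-1 * (lam1 R S -
      \sum_(b : (size S).-tuple bool | b != nseq_tuple (size S) false)
        shuffle_sign R (mask b S) (mask (map negb b) S) * x (mask b S) * yf k' (mask (map negb b) S))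
    else 0
  else 0.

Lemma yf_inv k1 k2 S : (size S < k1)%N -> (size S < k2)%N -> yf k1 S = yf k2 S.
Proof.
elim: k1 k2 S => [|k1 IH] [|k2] S //= h1 h2.
case: ifP => // _; congr (_ * (_ - _)); apply: eq_bigr => b hb; congr (_ * _).
by apply: IH; apply: leq_trans (size_neg_lt hb) _; rewrite -ltnS.
Qed.

Definition yinv : lam := fun S => yf (size S).+1 S.

Lemma xyinv : x [::] != 0 -> lam_eq (lam_mul x yinv) (lam1 R).
Proof.
move=> hx S; case sS: (sorted ltn S); last first.
  by rewrite /lam_mul sS; case: S sS.
rewrite lam_mulE // {1}/yinv /= sS mulrA mulfV // mul1r.
rewrite [X in _ - _ + X](eq_bigr (fun b : (size S).-tuple bool => shuffle_sign R (mask b S) (mask (map negb b) S) *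
   x (mask b S) * yf (size S) (mask (map negb b) S))) ?subrK //.
by move=> b hb; rewrite /yinv; congr (_ * _); apply: yf_inv; [| exact: size_neg_lt hb].
Qed.

Lemma yf_supp N : (forall S, x S != 0 -> all (fun s => s < N)%N S) ->
  forall k S, yf k S != 0 -> all (fun s => s < N)%N S.
Proof.
move=> hx; elim=> [|k IH] S /=; first by rewrite eqxx.
case: ifP => [sS|]; last by rewrite eqxx.
rewrite mulf_eq0 negb_or => /andP[_].
case: (eqVneq (lam1 R S) 0) => [-> | ]; last by case: S sS => [|a l] //=; rewrite eqxx.
rewrite sub0r oppr_eq0 => /sum_neq0_ex [b [_]].
rewrite !mulf_eq0 !negb_or => /andP[/andP[_ h1] h2].
exact: (mask_all (size_tuple b) (hx _ h1) (IH _ h2)).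
Qed.

End Inv.

Lemma unit_even (x : lam) : is_lam x -> lam_homog false x -> x [::] != 0 -> lam_unit x.
Proof.
move=> [hx1 [N hN]] hev h0; exists (yinv x); split; last split.
- split; first by move=> S hS; rewrite /yinv /= (negbTE hS).
  by exists N => S; apply: yf_supp.
- exact: xyinv.
- by move=> S; rewrite -lam_mul_comm_even //; apply: xyinv.
Qed.

End A.
Section F.
Variables (R : realType) (m n : nat).
Local Notation C := (R[i]).
Local Notation d := (m + n.*2)%N.
Local Notation lam := (lam R).

Lemma formE (a b : 'I_d -> lam) S : Defs.form a b S =
  \sum_(k < d) \sum_(l < d)
    lam_mul (fun S => form_coef R k l * (if bpar l then lam_par (a k) else a k) S) (b l) S.
Proof.
rewrite /Defs.form lam_sumE big_allpairs_dep /= big_enum /=; apply: eq_bigr => k _.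
by rewrite big_enum.
Qed.


Lemma lam_mul0l (x y : lam) : (forall S, x S = 0) -> forall S, lam_mul x y S = 0.
Proof.
move=> h S; rewrite /lam_mul; case: ifP => // _.
by rewrite big1 // => b _; rewrite h mulr0 mul0r.
Qed.

Lemma form_coef_par (k l : 'I_d) : form_coef R k l != 0 -> bpar k = bpar l.
Proof.
rewrite /form_coef /bpar; case: ifP => [/andP[_ /eqP/val_inj -> //]|_].
by case: ifP => [/andP[-> ->] //|_]; rewrite eqxx.
Qed.

Lemma is_lam_form (a b : 'I_d -> lam) : (forall k, is_lam (a k)) -> (forall l, is_lam (b l)) ->
  is_lam (Defs.form a b).
Proof.
move=> ha hb; apply: is_lam_ext (fun S => esym (formE a b S)) _.
apply: is_lam_bigsum => k; apply: is_lam_bigsum => l; apply: is_lam_mul => //.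
by apply: is_lam_scale; case: (bpar l) => //; apply: is_lam_par.
Qed.

Lemma homog_form pa pb (a b : 'I_d -> lam) :
  (forall k, lam_homog (bpar k (+) pa) (a k)) -> (forall l, lam_homog (bpar l (+) pb) (b l)) ->
  lam_homog (pa (+) pb) (Defs.form a b).
Proof.
move=> ha hb; apply: homog_ext (fun S => esym (formE a b S)) _.
apply: homog_bigsum => k; apply: homog_bigsum => l.
case: (eqVneq (form_coef R k l) 0) => [c0 | /form_coef_par e].
  by apply: homog_ext (homog0 _) => S; rewrite lam_mul0l // => S'; rewrite c0 mul0r.
have -> : pa (+) pb = (bpar k (+) pa) (+) (bpar l (+) pb).
  by rewrite e; move: (bpar l) (pa) (pb) => [] [] [].
apply: homog_mul => //; apply: homog_scale.
by case: (bpar l) => //; apply: homog_par.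
Qed.

Lemma form_nil (a b : 'I_d -> lam) :
  Defs.form a b [::] = \sum_(k < d) \sum_(l < d) form_coef R k l * a k [::] * b l [::].
Proof.
rewrite formE; apply: eq_bigr => k _; apply: eq_bigr => l _.
by rewrite lam_mul_nil; case: (bpar l); rewrite /lam_par ?expr0 ?mul1r.
Qed.

Definition At (A : mat R m n) (t : C) : mat R m n :=
  fun i j S => A i j S + (if i == j then t * lam1 R S else 0).

Lemma in_E_At (A : mat R m n) t : in_E A -> in_E (At A t).
Proof.
move=> hA i j; have [h1 h2] := hA i j; split.
  apply: (@is_lam_add _ (A i j) (fun S => if i == j then t * lam1 R S else 0)) => //.
  by case: (i == j); [apply: is_lam_scale; apply: is_lam1 | apply: is_lam0].
move: h2; case: (eqVneq i j) => [<- | nij] h2.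
  rewrite addbb in h2 *; apply: (@homog_add _ _ (A i i) (fun S => if i == i then t * lam1 R S else 0)) => //.
  by apply: (homog_ext _ (homog_scale (c := t) (@homog1 R))) => S; rewrite eqxx.
by apply: (homog_ext _ h2) => S; rewrite /At (negbTE nij) addr0.
Qed.


Section Body.
Variable A : mat R m n.

Definition bu (k l : 'I_d) : C :=
  \sum_(k' < d) \sum_(l' < d) form_coef R k' l' * A k' k [::] * A l' l [::].
Definition bv (k l : 'I_d) : C :=
  \sum_(k' < d) \sum_(l' < d) form_coef R k' l' *
     (A k' k [::] * (l' == l)%:R + (k' == k)%:R * A l' l [::]).
Definition Bp (k l : 'I_d) : {poly C} :=
  (form_coef R k l)%:P * 'X^2 + (bv k l)%:P * 'X + (bu k l)%:P.

Lemma delta_sum (F : 'I_d -> 'I_d -> C) k l :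
  \sum_(k' < d) \sum_(l' < d) F k' l' * (k' == k)%:R * (l' == l)%:R = F k l.
Proof.
rewrite (bigD1 k) //= [X in _ + X]big1 ?addr0.
  rewrite (bigD1 l) //= [X in _ + X]big1 ?addr0; first by rewrite !eqxx !mulr1.
  by move=> l' /negbTE ->; rewrite mulr0.
by move=> k' /negbTE nk; rewrite big1 // => l' _; rewrite nk mulr0 mul0r.
Qed.

Lemma Bp_eval t k l :
  (Defs.form (Defs.col (At A t) k) (Defs.col (At A t) l)) [::] = (Bp k l).[t].
Proof.
have -> : (Bp k l).[t] = form_coef R k l * t^+2 + bv k l * t + bu k l.
  by rewrite /Bp !hornerE.
rewrite form_nil /Defs.col /At /lam1 /=.
rewrite (eq_bigr (fun k' => \sum_(l' < d) (form_coef R k' l' * A k' k [::] * A l' l [::] +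
   form_coef R k' l' * (A k' k [::] * (l' == l)%:R + (k' == k)%:R * A l' l [::]) * t +
   form_coef R k' l' * (k' == k)%:R * (l' == l)%:R * t^+2))); last first.
  move=> k' _; apply: eq_bigr => l' _.
  by case: (k' == k); case: (l' == l); rewrite /=; ring.
under eq_bigr do rewrite !big_split /=.
rewrite !big_split /=.
under [X in _ + X + _]eq_bigr do rewrite -mulr_suml.
under [X in _ + X]eq_bigr do rewrite -mulr_suml.
rewrite -!mulr_suml delta_sum /bu /bv.
ring.
Qed.

Lemma Bp_coef k l : (Bp k l)`_2 = form_coef R k l.
Proof. by rewrite /Bp !coefD coefCM coefCM coefXn coefX coefC /= mulr1 mulr0 !addr0. Qed.

Lemma Bp_neq0 k l : form_coef R k l = 1 -> Bp k l != 0.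
Proof.
move=> h; apply/eqP => e; have := Bp_coef k l; rewrite e coef0 h => /eqP.
by rewrite eq_sym oner_eq0.
Qed.

End Body.

End F.
Section G.
Variable R : realType.
Local Notation C := (R[i]).
Local Notation lam := (lam R).

Definition polyin (f : C -> lam) :=
  exists pf : seq nat -> {poly C}, forall t S, f t S = (pf S).[t].

Lemma polyin_const (x : lam) : polyin (fun _ => x).
Proof. by exists (fun S => (x S)%:P) => t S; rewrite hornerC. Qed.

Lemma polyin_add f g : polyin f -> polyin g -> polyin (fun t => lam_add (f t) (g t)).
Proof.
move=> [pf hf] [pg hg]; exists (fun S => pf S + pg S) => t S.
by rewrite hornerD /lam_add hf hg.
Qed.

Lemma polyin_mul f g : polyin f -> polyin g -> polyin (fun t => lam_mul (f t) (g t)).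
Proof.
move=> [pf hf] [pg hg].
exists (fun S => if sorted ltn S then \sum_(b : (size S).-tuple bool)
   (shuffle_sign R (mask b S) (mask (map negb b) S))%:P * pf (mask b S) * pg (mask (map negb b) S)
   else 0) => t S.
rewrite /lam_mul; case: ifP => _; last by rewrite horner0.
rewrite horner_sum; apply: eq_bigr => b _.
by rewrite !hornerM hornerC hf hg.
Qed.

Lemma polyin_sum (I : Type) (F : I -> C -> lam) (s : seq I) :
  (forall i, polyin (F i)) -> polyin (fun t => lam_sum [seq F i t | i <- s]).
Proof.
move=> hF; elim: s => [|i s IH]; first exact: (polyin_const (lam0 R)).
exact: (polyin_add (hF i) IH).
Qed.

Lemma polyin_prod (I : Type) (F : I -> C -> lam) (s : seq I) :
  (forall i, polyin (F i)) -> polyin (fun t => lam_prod [seq F i t | i <- s]).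
Proof.
move=> hF; elim: s => [|i s IH]; first exact: (polyin_const (lam1 R)).
exact: (polyin_mul (hF i) IH).
Qed.

Lemma poly_zero (p : {poly C}) : (forall t, p.[t] = 0) -> p = 0.
Proof.
move=> h; apply/eqP; apply/negPn/negP => hp.
pose rs := [seq i%:R | i <- iota 0 (size p)] : seq C.
have hr : all (root p) rs by apply/allP => x _; rewrite /root h.
have hu : uniq rs.
  by rewrite map_inj_uniq ?iota_uniq // => a b /eqP; rewrite eqr_nat => /eqP.
by have := max_poly_roots hp hr hu; rewrite size_map size_iota ltnn.
Qed.

Variables m n : nat.
Local Notation d := (m + n.*2)%N.

Lemma polyin_At (A : mat R m n) i j : polyin (fun t => At A t i j).
Proof.
exists (fun S => (A i j S)%:P + (if i == j then 'X * (lam1 R S)%:P else 0)) => t S.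
rewrite /At hornerD hornerC; case: (i == j); last by rewrite horner0.
by rewrite hornerM hornerX hornerC.
Qed.

Lemma polyin_eval (A : mat R m n) (P : poly_fun R m n) : polyin (fun t => poly_eval P (At A t)).
Proof.
rewrite /poly_eval.
apply: (polyin_sum (F := fun u t => lam_mul u.1 (lam_prod [seq At A t ij.1 ij.2 | ij <- u.2]))) => u.
apply: (polyin_mul (f := fun _ => u.1)); first exact: polyin_const.
apply: (polyin_prod (F := fun ij t => At A t ij.1 ij.2)) => ij.
exact: polyin_At.
Qed.

End G.

Unset Implicit Arguments.
Theorem lemma6p6 (R : realType) (m n : nat) (P : poly_fun R m n) :
  poly_ok P ->
  (forall A : mat R m n, in_E A -> in_U A -> lam_eq (poly_eval P A) (lam0 R)) ->
  forall A : mat R m n, in_E A -> lam_eq (poly_eval P A) (lam0 R).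
Proof.
move=> _ hU A hA S.
have [pf hpf] := polyin_eval A P.
pose g := pf S.
pose Q := \prod_(k < (m + n.*2)%N) \prod_(l < (m + n.*2)%N | form_coef R k l == 1) Bp A k l.
have Qn : Q != 0.
  by apply/prodf_neq0 => k _; apply/prodf_neq0 => l /eqP; apply: Bp_neq0.
have Qf : forall t k l, Q.[t] != 0 -> form_coef R k l = 1 -> (Bp A k l).[t] != 0.
  move=> t k l; rewrite /Q horner_prod => /prodf_neq0 /(_ k isT).
  by rewrite horner_prod => /prodf_neq0 h hc; apply: h; rewrite hc.
have unitP : forall t (k l : 'I_(m + n.*2)), Q.[t] != 0 -> form_coef R k l = 1 ->
    bpar k = bpar l ->
    lam_unit (Defs.form (Defs.col (At A t) k) (Defs.col (At A t) l)).
  move=> t k l hQ hc hp; apply: unit_even.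
  - by apply: is_lam_form => i; have [] := in_E_At t hA i k; have [] := in_E_At t hA i l.
  - rewrite -(addbb (bpar k)) {2}hp; apply: homog_form => i.
      by have [] := in_E_At t hA i k.
    by have [] := in_E_At t hA i l.
  - by rewrite Bp_eval; apply: Qf.
have key : forall t, Q.[t] != 0 -> in_U (At A t).
  move=> t hQ; split.
    by move=> i hi; apply: unitP => //; rewrite /form_coef hi eqxx.
  move=> j h1 h2; apply: unitP => //.
    rewrite /form_coef /= addKn odd_double /= eqxx /= (ltn_eqF (ltnSn _)) andbF.
    have -> : (m <= m + j.*2)%N = true by apply: leq_addr.
    by have -> : (m <= (m + j.*2).+1)%N = true by apply: leqW; apply: leq_addr.
  rewrite /bpar /=.
  have -> : (m <= m + j.*2)%N = true by apply: leq_addr.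
  by have -> : (m <= (m + j.*2).+1)%N = true by apply: leqW; apply: leq_addr.
have gQ : g * Q = 0.
  apply: poly_zero => t; rewrite hornerM.
  case: (eqVneq Q.[t] 0) => [-> | /key hU']; first by rewrite mulr0.
  by rewrite /g -hpf (hU _ (in_E_At t hA) hU' S) mul0r.
have g0 : g = 0 by move/eqP: gQ; rewrite mulf_eq0 (negbTE Qn) orbF => /eqP.
have -> : A = At A 0.
  apply: functional_extensionality => i; apply: functional_extensionality => j.
  apply: functional_extensionality => T; rewrite /At.
  by case: (i == j); rewrite ?mul0r addr0.
by rewrite hpf -/g g0 horner0.
Qed.
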